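(* Let $a(t), b(t), c(t), d(t), f(t), g(t)$ be suitable real-valued functions of time, and consider the one-dimensional time-dependent Schrödinger equation $$i\psi_t = -a(t)\psi_{xx} + b(t)x^2\psi - ic(t)x\psi_x - id(t)\psi - f(t)x\psi + ig(t)\psi_x .$$ Then the substitution $$\psi = \frac{e^{i(\alpha(t)x^2+\delta(t)x+\kappa(t))}}{\sqrt{\mu(t)}}\,\chi(\xi,\tau),\qquad \xi=\beta(t)x+\varepsilon(t),\quad \tau=\gamma(t)$$ transforms this non-autonomous and inhomogeneous Schrödinger equation into the autonomous form $$-i\chi_\tau = -\chi_{\xi\xi} + c_0\xi^2\chi \qquad (c_0=0,1)$$ provided that $$\frac{d\alpha}{dt} + b + 2c\alpha + 4a\alpha^2 = c_0 a\beta^4,$$ $$\frac{d\beta}{dt} + (c+4a\alpha)\beta = 0,$$ $$\frac{d\gamma}{dt} + a\beta^2 = 0,$$ $$\frac{d\delta}{dt} + (c+4a\alpha)\delta = f + 2g\alpha + 2c_0 a\beta^3\varepsilon,$$ $$\frac{d\varepsilon}{dt} = (g-2a\delta)\beta,$$ $$\frac{d\kappa}{dt} = g\delta - a\delta^2 + c_0 a\beta^2\varepsilon^2 .$$ Here $$\alpha = \frac{1}{4a}\frac{\mu'}{\mu} - \frac{d}{2a}.$$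
   Context: Generalized (driven) harmonic oscillators: the Hamiltonian is an arbitrary quadratic in $p=-i\partial/\partial x$ and $x$ with time-dependent real coefficients $a,b,c,d,f,g$. The functions $\alpha,\beta,\gamma,\delta,\varepsilon,\kappa,\mu$ are functions of $t$ only. *)

(* Defs.v *)
From Stdlib Require Export Reals.
From Coquelicot Require Export Coquelicot.
Open Scope R_scope.

Definition cexpi (theta : R) : C := (cos theta, sin theta).

(* Main.v *)
Require Import Defs.
From Stdlib Require Import Lra.
Open Scope R_scope.
Lemma is_derive_C (u : R -> C) x (l : C) :
  is_derive (fun y => fst (u y)) x (fst l) ->
  is_derive (fun y => snd (u y)) x (snd l) -> is_derive u x l.
Proof.
  intros H1 H2.
  assert (H := filterdiff_comp'_2 (fun y => fst (u y)) (fun y => snd (u y)) (fun p q => (p,q) : C) x _ _ (fun p q => (p,q) : C) H1 H2).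
  unfold is_derive.
  eapply filterdiff_ext.
  2: eapply filterdiff_ext_lin. 2: apply H.
  - intros y; simpl. destruct (u y); reflexivity.
  - eapply filterdiff_ext_lin. eapply filterdiff_ext. 2: apply filterdiff_id. intros [p q]; reflexivity. intros [p q]; reflexivity.
  - intros y. destruct l; reflexivity.
Qed.
Lemma is_derive_fstC (u : R -> C) x l : is_derive u x l -> is_derive (fun y => fst (u y)) x (fst l).
Proof.
  intros H. unfold is_derive. eapply filterdiff_ext_lin.
  apply (filterdiff_comp' u fst x _ fst H). apply filterdiff_linear, is_linear_fst.
  intros y; reflexivity.
Qed.
Lemma is_derive_sndC (u : R -> C) x l : is_derive u x l -> is_derive (fun y => snd (u y)) x (snd l).
Proof.
  intros H. unfold is_derive. eapply filterdiff_ext_lin.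
  apply (filterdiff_comp' u snd x _ snd H). apply filterdiff_linear, is_linear_snd.
  intros y; reflexivity.
Qed.
Lemma is_derive_eqv {V : NormedModule R_AbsRing} (f : R -> V) x l l' : is_derive f x l -> l = l' -> is_derive f x l'.
Proof. intros H <-; exact H. Qed.
Lemma is_derive_Rmult (f g : R -> R) x df dg : is_derive f x df -> is_derive g x dg ->
  is_derive (fun y => f y * g y) x (df * g x + f x * dg).
Proof. intros H1 H2. apply (is_derive_mult f g x df dg H1 H2). intros; apply Rmult_comm. Qed.
Lemma is_derive_Rminus (f g : R -> R) x df dg : is_derive f x df -> is_derive g x dg ->
  is_derive (fun y => f y - g y) x (df - dg).
Proof. intros H1 H2. apply (is_derive_minus f g x df dg H1 H2). Qed.
Lemma is_derive_Rplus (f g : R -> R) x df dg : is_derive f x df -> is_derive g x dg ->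
  is_derive (fun y => f y + g y) x (df + dg).
Proof. intros H1 H2. apply (is_derive_plus f g x df dg H1 H2). Qed.
Lemma is_derive_Cmult (u v : R -> C) x u' v' : is_derive u x u' -> is_derive v x v' ->
  is_derive (fun y => Cmult (u y) (v y)) x (Cplus (Cmult u' (v x)) (Cmult (u x) v')).
Proof.
  intros H1 H2.
  pose proof (is_derive_fstC _ _ _ H1) as A1. pose proof (is_derive_sndC _ _ _ H1) as A2.
  pose proof (is_derive_fstC _ _ _ H2) as B1. pose proof (is_derive_sndC _ _ _ H2) as B2.
  apply is_derive_C; simpl.
  - eapply is_derive_eqv. apply is_derive_Rminus; apply is_derive_Rmult; eassumption.
    simpl; ring.
  - eapply is_derive_eqv. apply is_derive_Rplus; apply is_derive_Rmult; eassumption.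
    simpl; ring.
Qed.
Lemma is_derive_RtoC (r : R -> R) x r' : is_derive r x r' -> is_derive (fun y => RtoC (r y)) x (RtoC r').
Proof.
  intros H. apply is_derive_C; simpl. exact H. apply (is_derive_const (V:=R_NormedModule) 0 x).
Qed.
Lemma is_derive_cexpi (S : R -> R) x S' : is_derive S x S' ->
  is_derive (fun y => cexpi (S y)) x (Cmult (Cmult Ci (RtoC S')) (cexpi (S x))).
Proof.
  intros H. apply is_derive_C; simpl.
  - eapply is_derive_eqv. apply (is_derive_comp cos S). apply is_derive_cos. exact H.
    simpl. unfold scal; simpl; unfold mult; simpl. ring.
  - eapply is_derive_eqv. apply (is_derive_comp sin S). apply is_derive_sin. exact H.
    simpl. unfold scal; simpl; unfold mult; simpl. ring.
Qed.
Lemma chi_chain (chi chi_xi chi_tau : R * R -> C)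
  (Hd : forall p : R * R,
      filterdiff chi (locally p)
        (fun h : R * R => Cplus (Cmult (RtoC (fst h)) (chi_xi p))
                                (Cmult (RtoC (snd h)) (chi_tau p))))
  (P1 P2 : R -> R) t P1' P2' : is_derive P1 t P1' -> is_derive P2 t P2' ->
  is_derive (fun s => chi (P1 s, P2 s)) t
    (Cplus (Cmult (RtoC P1') (chi_xi (P1 t, P2 t))) (Cmult (RtoC P2') (chi_tau (P1 t, P2 t)))).
Proof.
  intros H1 H2.
  assert (HP : is_derive (fun s => (P1 s, P2 s) : C) t ((P1', P2') : C)).
  { apply is_derive_C; simpl; assumption. }
  unfold is_derive. eapply filterdiff_ext_lin.
  apply (filterdiff_comp' (fun s => (P1 s, P2 s) : C) chi t _ _ HP (Hd _)).
  intros y. apply injective_projections; simpl; unfold scal; simpl; unfold mult; simpl; ring.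
Qed.
Lemma is_derive_Cconst (c : C) x : is_derive (fun _ : R => c) x (RtoC 0).
Proof. apply is_derive_C; simpl; apply (is_derive_const (V:=R_NormedModule)). Qed.

Ltac Ceq := apply injective_projections; simpl; repeat progress (unfold scal, mult, plus; simpl); match goal with |- @eq _ ?l ?r => change (@eq R l r) end; ring.

Lemma m_deriv (a d alpha mu : R -> R) t (Ha : a t <> 0) (Hmu : 0 < mu t) (Dmu : ex_derive mu t)
  (Hdef : alpha t = Derive mu t / (4 * a t * mu t) - d t / (2 * a t)) :
  is_derive (fun s => / sqrt (mu s)) t (-(2 * a t * alpha t + d t) * / sqrt (mu t)).
Proof.
    assert (Hs : 0 < sqrt (mu t)) by (apply sqrt_lt_R0; exact Hmu).
    assert (Hss : sqrt (mu t) * sqrt (mu t) = mu t) by (apply sqrt_sqrt; lra).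
  auto_derive.
  - repeat split; try assumption; lra.
  - rewrite Hdef. change (Derive (fun x => mu x) t) with (Derive mu t). rewrite Hss. field. lra.
Qed.
Theorem lemma1
  (a b c d f g : R -> R)
  (alpha beta gamma delta eps kappa mu : R -> R)
  (c0 : R)
  (chi : R * R -> C) (chi_xi chi_tau chi_xixi : R * R -> C)
  (Hc0 : c0 = 0 \/ c0 = 1)
  (Ha : forall t, a t <> 0)
  (Hmu : forall t, 0 < mu t)
  (Dmu : forall t, ex_derive mu t)
  (Dalpha : forall t, ex_derive alpha t)
  (Dbeta : forall t, ex_derive beta t)
  (Dgamma : forall t, ex_derive gamma t)
  (Ddelta : forall t, ex_derive delta t)
  (Deps : forall t, ex_derive eps t)
  (Dkappa : forall t, ex_derive kappa t)
  (Halpha_def : forall t,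
      alpha t = Derive mu t / (4 * a t * mu t) - d t / (2 * a t))
  (Halpha : forall t, Derive alpha t + b t + 2 * c t * alpha t
              + 4 * a t * (alpha t) ^ 2 = c0 * a t * (beta t) ^ 4)
  (Hbeta : forall t, Derive beta t + (c t + 4 * a t * alpha t) * beta t = 0)
  (Hgamma : forall t, Derive gamma t + a t * (beta t) ^ 2 = 0)
  (Hdelta : forall t, Derive delta t + (c t + 4 * a t * alpha t) * delta t
              = f t + 2 * g t * alpha t + 2 * c0 * a t * (beta t) ^ 3 * eps t)
  (Heps : forall t, Derive eps t = (g t - 2 * a t * delta t) * beta t)
  (Hkappa : forall t, Derive kappa t
              = g t * delta t - a t * (delta t) ^ 2
                + c0 * a t * (beta t) ^ 2 * (eps t) ^ 2)
  (* chi is (Frechet) differentiable in (xi, tau) with partials chi_xi, chi_tau *)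
  (Hchi_diff : forall p : R * R,
      filterdiff chi (locally p)
        (fun h : R * R => Cplus (Cmult (RtoC (fst h)) (chi_xi p))
                                (Cmult (RtoC (snd h)) (chi_tau p))))
  (* chi_xixi is the second partial derivative in xi *)
  (Hchi_xixi : forall xi tau : R,
      is_derive (fun s : R => chi_xi (s, tau)) xi (chi_xixi (xi, tau)))
  (* the autonomous equation  -i chi_tau = - chi_xixi + c0 xi^2 chi *)
  (Hchi_eq : forall xi tau : R,
      Cmult (Copp Ci) (chi_tau (xi, tau))
      = Cplus (Copp (chi_xixi (xi, tau)))
              (Cmult (RtoC (c0 * xi ^ 2)) (chi (xi, tau)))) :
  let psi : R -> R -> C := fun x t =>
    Cmult (RtoC (/ sqrt (mu t)))
      (Cmult (cexpi (alpha t * x ^ 2 + delta t * x + kappa t))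
             (chi (beta t * x + eps t, gamma t))) in
  exists psi_x psi_xx psi_t : R -> R -> C,
    (forall x t, is_derive (fun y : R => psi y t) x (psi_x x t)) /\
    (forall x t, is_derive (fun y : R => psi_x y t) x (psi_xx x t)) /\
    (forall x t, is_derive (fun s : R => psi x s) t (psi_t x t)) /\
    (forall x t,
      (* i psi_t = -a psi_xx + b x^2 psi - i c x psi_x - i d psi - f x psi + i g psi_x *)
      Cmult Ci (psi_t x t)
      = Cplus (Cplus (Cplus (Cplus (Cplus
          (Cmult (RtoC (- a t)) (psi_xx x t))
          (Cmult (RtoC (b t * x ^ 2)) (psi x t)))
          (Cmult (Copp Ci) (Cmult (RtoC (c t * x)) (psi_x x t))))
          (Cmult (Copp Ci) (Cmult (RtoC (d t)) (psi x t))))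
          (Cmult (RtoC (- (f t * x))) (psi x t)))
          (Cmult Ci (Cmult (RtoC (g t)) (psi_x x t)))).
Proof.
  cbv zeta.
  set (m := fun t => / sqrt (mu t)).
  set (Sx := fun x t => 2 * alpha t * x + delta t).
  set (E := fun x t => cexpi (alpha t * x ^ 2 + delta t * x + kappa t)).
  set (XI := fun x t => beta t * x + eps t).
  exists (fun x t => Cmult (RtoC (m t)) (Cmult (E x t)
      (Cplus (Cmult (Cmult Ci (RtoC (Sx x t))) (chi (XI x t, gamma t)))
             (Cmult (RtoC (beta t)) (chi_xi (XI x t, gamma t)))))).
  exists (fun x t => Cmult (RtoC (m t)) (Cmult (E x t)
      (Cplus (Cmult (Cmult Ci (RtoC (Sx x t)))
         (Cplus (Cmult (Cmult Ci (RtoC (Sx x t))) (chi (XI x t, gamma t)))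
             (Cmult (RtoC (beta t)) (chi_xi (XI x t, gamma t)))))
       (Cplus (Cplus (Cmult (Cmult Ci (RtoC (2 * alpha t))) (chi (XI x t, gamma t)))
                     (Cmult (Cmult Ci (RtoC (Sx x t))) (Cmult (RtoC (beta t)) (chi_xi (XI x t, gamma t)))))
              (Cmult (RtoC (beta t)) (Cmult (RtoC (beta t)) (chi_xixi (XI x t, gamma t)))))))).
  exists (fun x t => Cplus (Cmult (RtoC (-(2 * a t * alpha t + d t) * m t)) (Cmult (E x t) (chi (XI x t, gamma t))))
     (Cmult (RtoC (m t)) (Cplus
        (Cmult (Cmult (Cmult Ci (RtoC (Derive alpha t * x ^ 2 + Derive delta t * x + Derive kappa t))) (E x t)) (chi (XI x t, gamma t)))
        (Cmult (E x t) (Cplus (Cmult (RtoC (Derive beta t * x + Derive eps t)) (chi_xi (XI x t, gamma t)))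
                              (Cmult (RtoC (Derive gamma t)) (chi_tau (XI x t, gamma t)))))))).
  assert (DE : forall x t, is_derive (fun y => E y t) x (Cmult (Cmult Ci (RtoC (Sx x t))) (E x t))).
  { intros x t. unfold E. apply (is_derive_cexpi (fun y => alpha t * y ^ 2 + delta t * y + kappa t)). unfold Sx. auto_derive; auto; ring. }
  assert (DX : forall x t, is_derive (fun y => chi (XI y t, gamma t)) x
                 (Cplus (Cmult (RtoC (beta t)) (chi_xi (XI x t, gamma t))) (Cmult (RtoC 0) (chi_tau (XI x t, gamma t))))).
  { intros x t. unfold XI. apply (chi_chain chi chi_xi chi_tau Hchi_diff (fun y => beta t * y + eps t) (fun _ => gamma t)).
    auto_derive; auto; ring. apply (is_derive_const (V:=R_NormedModule)). }
  assert (DXi : forall x t, is_derive (fun y => chi_xi (XI y t, gamma t)) x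
                 (Cmult (RtoC (beta t)) (chi_xixi (XI x t, gamma t)))).
  { intros x t. eapply is_derive_eqv.
    apply (is_derive_comp (fun s => chi_xi (s, gamma t)) (fun y => XI y t)). apply Hchi_xixi.
    unfold XI; auto_derive; repeat split.
    unfold m, Sx, E, XI; Ceq. }
  assert (DSx : forall x t, is_derive (fun y => RtoC (Sx y t)) x (RtoC (2 * alpha t))).
  { intros x t. apply is_derive_RtoC. unfold Sx. auto_derive; auto; ring. }
  assert (Dm : forall x t, is_derive (fun _ : R => RtoC (m t)) x (RtoC 0)) by (intros; apply is_derive_Cconst).
  split; [|split; [|split]].
  - intros x t.
    eapply is_derive_eqv.
    apply is_derive_Cmult. apply Dm. apply is_derive_Cmult. apply DE. apply DX.
    unfold m, Sx, E, XI; Ceq.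
  - intros x t.
    eapply is_derive_eqv.
    apply is_derive_Cmult. apply Dm. apply is_derive_Cmult. apply DE.
    apply (is_derive_plus (V := C_R_NormedModule)).
    apply is_derive_Cmult. apply is_derive_Cmult. apply is_derive_Cconst. apply DSx. apply DX.
    apply is_derive_Cmult. apply is_derive_Cconst. apply DXi.
    unfold m, Sx, E, XI; Ceq.
  - intros x t.
    eapply is_derive_eqv.
    apply is_derive_Cmult. apply is_derive_RtoC. apply (m_deriv a d alpha mu t (Ha t) (Hmu t) (Dmu t) (Halpha_def t)).
    apply is_derive_Cmult.
    apply (is_derive_cexpi (fun s => alpha s * x ^ 2 + delta s * x + kappa s)). auto_derive. repeat split; auto. reflexivity.
    apply (chi_chain chi chi_xi chi_tau Hchi_diff (fun s => beta s * x + eps s) gamma).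
    auto_derive. repeat split; auto. reflexivity. apply Derive_correct, Dgamma.
    unfold m, Sx, E, XI; apply injective_projections; simpl; repeat progress (unfold scal, mult, plus; simpl); change (Derive (fun x => alpha x)) with (Derive alpha); change (Derive (fun x => delta x)) with (Derive delta); change (Derive (fun x => kappa x)) with (Derive kappa);change (Derive (fun x => beta x)) with (Derive beta);change (Derive (fun x => eps x)) with (Derive eps); ring.
  - intros x t.
    assert (HX : chi_xixi (XI x t, gamma t) = Cplus (Cmult Ci (chi_tau (XI x t, gamma t)))
                   (Cmult (RtoC (c0 * (XI x t) ^ 2)) (chi (XI x t, gamma t)))).
    { pose proof (Hchi_eq (XI x t) (gamma t)) as H.
      pose proof (f_equal fst H) as H1. pose proof (f_equal snd H) as H2. simpl in H1, H2.
      apply injective_projections; simpl; lra. }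
    rewrite HX.
    assert (EA : Derive alpha t = c0 * a t * beta t ^ 4 - b t - 2 * c t * alpha t - 4 * a t * alpha t ^ 2)
      by (pose proof (Halpha t); lra).
    assert (EB : Derive beta t = - (c t + 4 * a t * alpha t) * beta t)
      by (pose proof (Hbeta t); lra).
    assert (EG : Derive gamma t = - (a t * beta t ^ 2))
      by (pose proof (Hgamma t); lra).
    assert (ED : Derive delta t = f t + 2 * g t * alpha t + 2 * c0 * a t * beta t ^ 3 * eps t - (c t + 4 * a t * alpha t) * delta t)
      by (pose proof (Hdelta t); lra).
    rewrite EA, EB, EG, ED, (Heps t), (Hkappa t).
    unfold m, Sx, E, XI; Ceq.
Qed.
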